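(* Let $\sigma\in\mathfrak{S}_n$ and $P=\Psi_n(\sigma)$. Let $1\leq i<j\leq n$. Then the letter $i$ is immediately followed by the letter $j$ in the word $\sigma(1)\sigma(2)\cdots\sigma(n)$ if and only if the three following conditions hold: (a) $i<_h j$ in $P$; (b) for all $x\in P$, if $x<_h j$ in $P$ then $x\leq_h i$ or $x\geq_r i$; (c) for all $x\in P$, if $x>_h i$ in $P$ then $x\geq_h j$ or $x\leq_r j$.
   Context: For $\sigma\in\mathfrak{S}_n$, $\Psi_n(\sigma)=P_\sigma$ is the double poset on $\{1,\ldots,n\}$ with $i\leq_h j$ iff ($i\leq j$ and $\sigma^{-1}(i)\leq\sigma^{-1}(j)$), and $i\leq_r j$ iff ($i\leq j$ and $\sigma^{-1}(i)\geq\sigma^{-1}(j)$). (It is a plane poset: two distinct elements are $\leq_h$-comparable iff they are not $\leq_r$-comparable.) Strict versions $<_h,<_r$ denote the orders with equality excluded. *)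

(* Defs.v *)
From mathcomp Require Import all_boot all_order all_fingroup.
Set Implicit Arguments. Unset Strict Implicit. Unset Printing Implicit Defensive.

(* Letters {1..n} are encoded as 'I_n = {0..n-1} (shift by one); positions too.
   The word of sigma is sigma(0) sigma(1) ... sigma(n-1). *)

Definition leh n (s : 'S_n) (i j : 'I_n) : bool :=
  (i <= j)%N && (s^-1%g i <= s^-1%g j)%N.
Definition ler n (s : 'S_n) (i j : 'I_n) : bool :=
  (i <= j)%N && (s^-1%g j <= s^-1%g i)%N.
Definition lth n (s : 'S_n) (i j : 'I_n) : bool := (i != j) && leh s i j.
Definition ltr n (s : 'S_n) (i j : 'I_n) : bool := (i != j) && ler s i j.

Definition imm_followed n (s : 'S_n) (i j : 'I_n) : Prop :=
  exists k : 'I_n, exists k' : 'I_n, nat_of_ord k' = (nat_of_ord k).+1 /\ s k = i /\ s k' = j.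

(* Main.v *)
Require Import Defs.
From mathcomp Require Import all_boot all_order all_fingroup.
From mathcomp Require Import zify.

Theorem lemma11 (n : nat) (s : 'S_n) (i j : 'I_n) :
  (i < j)%N ->
  (imm_followed s i j <->
   [/\ lth s i j,
       (forall x : 'I_n, lth s x j -> leh s x i \/ ler s i x) &
       (forall x : 'I_n, lth s i x -> leh s j x \/ ler s x j)]).
Proof.
move=> hij; split.
- move=> [k [k' [hk [Hi Hj]]]]; subst i j.
  rewrite /lth /leh /ler !permK.
  have ne : forall a b : 'I_n, (a != b) = (nat_of_ord a != nat_of_ord b).
    by move=> a b; rewrite -val_eqE.
  split.
  + rewrite ne; apply/andP; split; first by apply/eqP; lia.
    apply/andP; split; lia.
  + move=> x; rewrite ne => /andP [/eqP nx /andP [h1 h2]].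
    have nq : nat_of_ord (s^-1%g x) != k'.
      apply/eqP=> e; apply: nx; have -> : k' = s^-1%g x by apply: val_inj.
      by rewrite permKV.
    move/eqP: nq => nq.
    case: (leqP x (s k)) => hx; [left|right]; apply/andP; split; lia.
  + move=> x; rewrite ne => /andP [/eqP nx /andP [h1 h2]].
    have nq : nat_of_ord (s^-1%g x) != k.
      apply/eqP=> e; apply: nx; have -> : k = s^-1%g x by apply: val_inj.
      by rewrite permKV.
    move/eqP: nq => nq.
    case: (leqP (s k') x) => hx; [left|right]; apply/andP; split; lia.
- move=> [/andP [nij /andP [_ hp]] hb hc].
  have hne : nat_of_ord (s^-1%g i) != s^-1%g j.
    apply/eqP=> e; move/eqP: nij; apply.
    have e2 : s^-1%g i = s^-1%g j by apply: val_inj.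
    by rewrite -(permKV s i) e2 permKV.
  move/eqP: hne => hne.
  have hq : ((s^-1%g i).+1 < n)%N by have := ltn_ord (s^-1%g j); lia.
  exists (s^-1%g i), (s^-1%g j).
  split; last by rewrite !permKV.
  case: (ltngtP (s^-1%g j) (s^-1%g i).+1) => h; [lia| |done].
  pose q := Ordinal hq.
  pose x := s q.
  have px : s^-1%g x = q by rewrite /x permK.
  have ne : forall a b : 'I_n, (a != b) = (nat_of_ord a != nat_of_ord b).
    by move=> a b; rewrite -val_eqE.
  have nxj : nat_of_ord x != nat_of_ord j.
    apply/eqP=> e; have : x = j by apply: val_inj.
    move=> e2; move: px; rewrite e2 => px.
    by move: h; rewrite px /=; lia.
  case: (ltnP x j) => hxj.
  + have : lth s x j by rewrite /lth /leh ne nxj px /=; apply/andP; split; lia.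
    move/hb; rewrite /leh /ler px /=; case=> /andP [a b]; lia.
  + have : lth s i x.
      rewrite /lth /leh ne px /=; apply/andP; split; first by apply/eqP; lia.
      apply/andP; split; lia.
    move/hc; rewrite /leh /ler px /=; case=> /andP [a b]; lia.
Qed.
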